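(* Let $X$ be an infinite compact metrizable space and $h\colon X\to X$ a minimal homeomorphism. If $F\subset X$ is a closed topologically $h$-small set, then $F$ is thin.
   Context: A closed set $F\subset X$ is topologically $h$-small if there is $m\in\mathbb{Z}_{+}$ such that whenever $d(0),\dots,d(m)$ are $m+1$ distinct integers, $h^{d(0)}(F)\cap\cdots\cap h^{d(m)}(F)=\varnothing$. For $F\subset X$ closed and $U\subset X$ open, write $F\prec U$ if there exist $M\in\mathbb{N}$, open sets $U_0,\dots,U_M\subset X$ and integers $d(0),\dots,d(M)$ such that $F\subset\bigcup_{j=0}^M U_j$, $h^{d(j)}(U_j)\subset U$ for all $j$, and the sets $h^{d(j)}(U_j)$, $0\le j\le M$, are pairwise disjoint. A closed set $F$ is thin if $F\prec U$ for every non-empty open $U\subset X$. *)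

(* Defs.v *)
From HB Require Import structures.
From mathcomp Require Import all_boot all_order all_algebra.
From mathcomp Require Import all_classical all_reals all_analysis.
Set Implicit Arguments. Unset Strict Implicit. Unset Printing Implicit Defensive.
Import Order.TTheory GRing.Theory Num.Theory.
Local Open Scope classical_set_scope.
Local Open Scope ring_scope.

Definition homeomorphism (X : topologicalType) (h hinv : X -> X) : Prop :=
  [/\ continuous h, continuous hinv, cancel h hinv & cancel hinv h].

Definition hpow (X : Type) (h hinv : X -> X) (d : int) : X -> X :=
  match d with
  | Posz n => iter n h
  | Negz n => iter n.+1 hinv
  end.

Definition minimal_homeo (X : topologicalType) (h : X -> X) : Prop :=
  forall A : set X, closed A -> h @` A = A -> A = set0 \/ A = setT.

Definition top_small (X : topologicalType) (h hinv : X -> X) (F : set X) : Prop :=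
  exists m : nat, forall d : 'I_m.+1 -> int, injective d ->
    \bigcap_(j in [set: 'I_m.+1]) (hpow h hinv (d j) @` F) = set0.

Definition prec (X : topologicalType) (h hinv : X -> X) (F U : set X) : Prop :=
  exists (M : nat) (V : 'I_M.+1 -> set X) (d : 'I_M.+1 -> int),
    [/\ forall j, open (V j),
        F `<=` \bigcup_(j in [set: 'I_M.+1]) V j,
        forall j, hpow h hinv (d j) @` V j `<=` U &
        forall j k, j != k ->
          hpow h hinv (d j) @` V j `&` hpow h hinv (d k) @` V k = set0].

Definition thin (X : topologicalType) (h hinv : X -> X) (F : set X) : Prop :=
  forall U : set X, open U -> U !=set0 -> prec h hinv F U.

(* Main.v *)
From HB Require Import structures.
Require Import Defs.
From mathcomp Require Import all_boot all_order all_algebra finmap.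
From mathcomp Require Import all_classical all_reals all_analysis.
From mathcomp Require Import zify.
Set Implicit Arguments. Unset Strict Implicit. Unset Printing Implicit Defensive.
Import Order.TTheory GRing.Theory Num.Theory.
Local Open Scope classical_set_scope.
Local Open Scope ring_scope.



Section HP.
Variables (X : Type) (h hinv : X -> X).
Hypotheses (hK : cancel h hinv) (hinvK : cancel hinv h).

Lemma hpow0 x : hpow h hinv 0 x = x. Proof. by []. Qed.

Lemma hpowS1 d x : hpow h hinv (d + 1) x = h (hpow h hinv d x).
Proof.
case: d => [n|n].
  by have -> : (Posz n + 1 = Posz n.+1)%R by lia.
case: n => [|k]; first by rewrite /= hinvK.
have -> : (Negz k.+1 + 1 = Negz k)%R by rewrite !NegzE; lia.
by rewrite /= hinvK.
Qed.

Lemma hpowB1 d x : hpow h hinv (d - 1) x = hinv (hpow h hinv d x).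
Proof.
by rewrite -{2}(subrK 1 d) hpowS1 hK.
Qed.

Lemma hpowD a b x : hpow h hinv (a + b) x = hpow h hinv a (hpow h hinv b x).
Proof.
elim/int_rec: a x => [|n IH|n IH] x; first by rewrite add0r.
  have -> : (n.+1%:Z + b = (n%:Z + b) + 1)%R by lia.
  rewrite hpowS1 IH -hpowS1; congr hpow; lia.
have -> : (- n.+1%:Z + b = (- n%:Z + b) - 1)%R by lia.
rewrite hpowB1 IH -hpowB1; congr hpow; lia.
Qed.

Lemma hpowK a x : hpow h hinv (- a) (hpow h hinv a x) = x.
Proof. by rewrite -hpowD addNr. Qed.

Lemma hpow_inj a : injective (hpow h hinv a).
Proof. by move=> x y /(congr1 (hpow h hinv (- a))); rewrite !hpowK. Qed.
End HP.



Lemma iter_cont (T : topologicalType) (f : T -> T) n :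
  continuous f -> continuous (iter n f).
Proof.
move=> fc; elim: n => [|n IH] x /=; first exact: cvg_id.
exact: (@continuous_comp _ _ _ (iter n f) f x (IH x) (fc _)).
Qed.

Lemma hpow_cont (T : topologicalType) (h hinv : T -> T) d :
  continuous h -> continuous hinv -> continuous (hpow h hinv d).
Proof. by case: d => n hc hic /=; apply: iter_cont. Qed.

Definition pX {T : topologicalType} (x : T) : Type := T.
HB.instance Definition _ (T : topologicalType) (x : T) := Topological.on (pX x).
HB.instance Definition _ (T : topologicalType) (x : T) := isPointed.Build (pX x) x.

Lemma fin_cover (T : topologicalType) (K : set T) (f : int -> set T) :
  compact K -> (forall n, open (f n)) -> K `<=` \bigcup_n f n ->
  exists s : seq int, uniq s /\
    forall x, K x -> exists2 i, (i < size s)%N & f (nth 0 s i) x.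
Proof.
move=> cK fo Kc.
have [->|/set0P [x0 _]] := eqVneq K set0; first by exists [::]; split => // x.
have : @cover_compact (pX x0) K by rewrite -compact_cover; exact: cK.
move=> /(_ int setT f (fun n _ => fo n)) [].
  by move=> x /Kc [n _ fx]; exists n.
move=> D' _ KD; exists D'; split; first exact: fset_uniq.
move=> x /KD [n /= nD fnx]; exists (index n D'); first by rewrite index_mem.
by rewrite nth_index.
Qed.

Lemma sep_closed (T : topologicalType) (K1 K2 : set T) :
  hausdorff_space T -> compact [set: T] -> closed K1 -> closed K2 ->
  K1 `&` K2 = set0 ->
  exists A B : set T, [/\ open A, open B, K1 `<=` A, K2 `<=` B &
     A `&` B = set0].
Proof.
move=> hs cT c1 c2 d12.
have : filter_from (set_nbhs K1) closure (~` K2).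
  apply: (compact_normal hs cT c1).
  apply/set_nbhsP; exists (~` K2); split => //; first by rewrite -closedC setCK.
  by move=> x K1x K2x; have : (K1 `&` K2) x by []; rewrite d12.
case=> B /set_nbhsP [C [oC K1C CB]] clB.
exists C, (~` closure B); split => //.
- by rewrite -closedC setCK; exact: closed_closure.
- by move=> x K2x clx; exact: (clB x clx).
- rewrite -subset0 => x [Cx]; apply; apply: subset_closure; exact: CB.
Qed.



Definition pr (T : topologicalType) (h hinv : T -> T) (F U : set T) :=
  exists n (V : nat -> set T) (d : nat -> int),
  [/\ (forall i, (i < n)%N -> open (V i)),
      (forall i, (i < n)%N -> hpow h hinv (d i) @` V i `<=` U),
      (forall x, F x -> exists2 i, (i < n)%N & V i x) &
      (forall i j, (i < n)%N -> (j < n)%N -> i != j -> forall z,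
         (hpow h hinv (d i) @` V i) z -> (hpow h hinv (d j) @` V j) z -> False)].

Section PR.
Variables (T : topologicalType) (h hinv : T -> T).

Lemma pr_sub F F' U U' : F' `<=` F -> U `<=` U' -> pr h hinv F U -> pr h hinv F' U'.
Proof.
move=> FF UU [n [V [d [op im cov dis]]]]; exists n, V, d; split => //.
- by move=> i ilt z /(im i ilt) /UU.
- by move=> x /FF /cov.
Qed.

Lemma pr_set0 U : pr h hinv set0 U.
Proof. by exists 0%N, (fun _ => set0), (fun _ => 0); split. Qed.

Lemma pr_union A B U1 U2 : pr h hinv A U1 -> pr h hinv B U2 ->
  U1 `&` U2 = set0 -> pr h hinv (A `|` B) (U1 `|` U2).
Proof.
move=> [n1 [V1 [d1 [op1 im1 cov1 dis1]]]] [n2 [V2 [d2 [op2 im2 cov2 dis2]]]] U12.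
have U12' z : U1 z -> U2 z -> False.
  by move=> a b; have : (U1 `&` U2) z by []; rewrite U12.
exists (n1 + n2)%N, (fun i => if (i < n1)%N then V1 i else V2 (i - n1)%N),
  (fun i => if (i < n1)%N then d1 i else d2 (i - n1)%N); split.
- move=> i ilt; case: ifP => [lt|/negbT]; first exact: op1.
  by rewrite -leqNgt => le; apply: op2; lia.
- move=> i ilt; case: ifP => [lt|/negbT]; first by move=> z /(im1 _ lt); left.
  by rewrite -leqNgt => le z /(im2 (i - n1)%N) H; right; apply: H; lia.
- move=> x [/cov1 [i ilt Vx]|/cov2 [i ilt Vx]].
    by exists i; [lia | rewrite ilt].
  exists (n1 + i)%N; first lia.
  by rewrite ltnNge leq_addr /= addKn.
- move=> i j ilt jlt ij z.
  case: ifP => [ilt1|/negbT]; case: ifP => [jlt1|/negbT].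
  + exact: dis1.
  + rewrite -leqNgt => jle Hi Hj.
    apply: (U12' z); [exact: (im1 i ilt1) | apply: (im2 (j - n1)%N) => //; lia].
  + rewrite -leqNgt => ile Hi Hj.
    apply: (U12' z); [exact: (im1 j jlt1) | apply: (im2 (i - n1)%N) => //; lia].
  + rewrite -!leqNgt => jle ile; apply: dis2; lia.
Qed.

Lemma pr_prec F U : pr h hinv F U -> prec h hinv F U.
Proof.
move=> [n [V [d [op im cov dis]]]].
exists n, (fun j : 'I_n.+1 => if (j < n)%N then V j else set0), (fun j => d j).
split.
- by move=> j; case: ifP => [jl|_]; [exact: op | exact: open0].
- by move=> x /cov [i ilt Vx]; exists (Ordinal (leqW ilt)) => //=; rewrite ilt.
- move=> j; case: ifP => [jl|_]; first exact: im.
  by move=> z [x].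
- move=> j k jk; rewrite -subset0 => z [].
  case: ifP => [jl|_]; last by case.
  case: ifP => [kl|_]; last by move=> _ [].
  by apply: (dis j k jl kl jk).
Qed.
End PR.



Section Dyn.
Variables (T : topologicalType) (h hinv : T -> T).
Hypotheses (hom : homeomorphism h hinv) (mini : minimal_homeo h).

Lemma orbit_cover (Y : set T) : open Y -> Y !=set0 ->
  forall x, exists n, Y (hpow h hinv n x).
Proof.
case: hom => hc hic hK hiK oY [y Yy].
pose A := [set x | forall n, ~ Y (hpow h hinv n x)].
have cA : closed A.
  have -> : A = \bigcap_(n in [set: int]) ~` (hpow h hinv n @^-1` Y).
    by apply/seteqP; split => [x Ax n _|x Ax n]; apply: Ax.
  apply: closed_bigI => n _; apply: open_closedC; apply: open_comp => //.
  by move=> z _; apply: hpow_cont.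
have hA : h @` A = A.
  apply/seteqP; split.
    move=> _ [x Ax <-] n; have -> : h x = hpow h hinv 1 x by [].
    rewrite -hpowD //; exact: Ax.
  move=> x Ax; exists (hinv x); last by rewrite hiK.
  move=> n; have -> : hinv x = hpow h hinv (-1) x by [].
  rewrite -hpowD //; exact: Ax.
case: (mini cA hA) => [A0|AT] x.
  apply: contrapT => nex.
  have : A x by move=> n Yn; apply: nex; exists n.
  by rewrite A0.
have : A y by rewrite AT.
by move=> /(_ 0).
Qed.

Lemma two_points : compact [set: T] -> infinite_set [set: T] ->
  forall U : set T, open U -> U !=set0 -> exists x y, [/\ U x, U y & x != y].
Proof.
move=> cT iT U oU [u Uu].
apply: contrapT => nt.
have Uu1 z : U z -> z = u.
  move=> Uz; apply: contrapT => zu; apply: nt; exists z, u; split => //.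
  exact/eqP.
have := @fin_cover T [set: T] (fun n => hpow h hinv n @^-1` U) cT.
case.
- case: hom => hc hic _ _ n; apply: open_comp => //.
  by move=> z _; apply: hpow_cont.
- by move=> x _; have [n Hn] := orbit_cover oU (ex_intro _ u Uu) x; exists n.
move=> s [_ cov]; apply: iT.
apply: (@sub_finite_set _ _ ((fun n => hpow h hinv (- n) u) @` [set` s])).
  move=> x _; have [i ilt Hx] := cov x I.
  exists (nth 0 s i); first by rewrite /= mem_nth.
  have := Uu1 _ Hx => <-; case: hom => _ _ hK hiK; exact: hpowK.
apply: finite_image; exact: finite_seq.
Qed.

Lemma split_open : hausdorff_space T -> compact [set: T] -> infinite_set [set: T] ->
  forall U : set T, open U -> U !=set0 ->
  exists U1 U2 : set T, [/\ open U1 /\ U1 !=set0, open U2 /\ U2 !=set0,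
     U1 `<=` U, U2 `<=` U & U1 `&` U2 = set0].
Proof.
move=> hs cT iT U oU U0.
have [x [y [Ux Uy xy]]] := two_points cT iT oU U0.
have := hs; rewrite open_hausdorff => /(_ x y xy).
case=> [[A B]] /= [xA yB] [oA oB /eqP AB].
exists (U `&` A), (U `&` B); split.
- split; [exact: openI | exists x; split => //; exact: set_mem].
- split; [exact: openI | exists y; split => //; exact: set_mem].
- by move=> z [].
- by move=> z [].
- rewrite -subset0 => z [[_ Az] [_ Bz]]; have : (A `&` B) z by [].
  by rewrite AB.
Qed.

Lemma pr_bigunion : hausdorff_space T -> compact [set: T] -> infinite_set [set: T] ->
  forall N (G : nat -> set T) U, open U -> U !=set0 ->
  (forall p, (p < N)%N -> forall W, open W -> W !=set0 -> pr h hinv (G p) W) ->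
  pr h hinv [set x | exists2 p, (p < N)%N & G p x] U.
Proof.
move=> hs cT iT; elim=> [|N IH] G U oU U0 HG.
  by apply: (pr_sub _ _ (pr_set0 h hinv U)) => // x [].
have [U1 [U2 [[op1 n1] [op2 n2] s1 s2 d12]]] := split_open hs cT iT oU U0.
have := pr_union (IH G U1 op1 n1 (fun p pl => HG p (leqW pl)))
                 (HG N (ltnSn N) U2 op2 n2) d12.
apply: pr_sub.
  move=> x [p pl Gx]; rewrite ltnS leq_eqVlt in pl.
  case/orP: pl => [/eqP pN|pl]; [right; rewrite -pN // | left; exists p => //].
by move=> z [/s1|/s2].
Qed.
End Dyn.



Definition smallk (T : Type) (h hinv : T -> T) (k : nat) (F : set T) :=
  forall a : 'I_k.+1 -> int, injective a ->
    \bigcap_(j in [set: 'I_k.+1]) (hpow h hinv (a j) @` F) = set0.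

Section Small.
Variables (T : Type) (h hinv : T -> T).
Hypotheses (hK : cancel h hinv) (hinvK : cancel hinv h).

Lemma small0 F : smallk h hinv 0 F -> F = set0.
Proof.
move=> sF; have := sF (fun _ => 0) (fun i j _ => etrans (ord1 i) (esym (ord1 j))).
rewrite -!subset0 => H x Fx; apply: (H x) => j _; exists x => //.
Qed.

Lemma small_step k F e : e != 0 -> smallk h hinv k.+1 F ->
  smallk h hinv k (F `&` (hpow h hinv e @` F)).
Proof.
move=> e0 sF a ia; rewrite -subset0 => y Hy.
pose js := [arg max_(j > ord0) (e * a j)]%O.
have jsP : forall j, e * a j <= e * a js.
  move=> j; rewrite /js; case: Order.TotalTheory.arg_maxP => // i _ Hi.
  exact: Hi.
pose a' (j : 'I_k.+2) := if (j < k.+1)%N then a (inord j) else a js + e.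
have ee : 0 < e * e by lia.
have ia' : injective a'.
  move=> i j; rewrite /a'; case: ifP => il; case: ifP => jl.
  - move/ia/(congr1 (@nat_of_ord _)); rewrite !inordK // => ij; exact: val_inj.
  - move=> E; have := jsP (inord i); rewrite E; lia.
  - move=> E; have := jsP (inord j); rewrite -E; lia.
  - move=> _; apply: ord_inj; move: (ltn_ord i) (ltn_ord j) il jl; lia.
have := sF a' ia'; rewrite -subset0 => /(_ y); apply => j _; rewrite /a'.
case: ifP => jl.
  by have [g [Fg _] <-] := Hy (inord j) I; exists g.
have [g [_ [f Ff <-]] <-] := Hy js I.
by exists f => //; rewrite hpowD.
Qed.
End Small.



Fixpoint capn (T : Type) (N : nat) (Q : nat -> set T) : set T :=
  match N with 0 => setT | N.+1 => capn N Q `&` Q N end.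

Lemma capn_open (T : topologicalType) N (Q : nat -> set T) :
  (forall p, (p < N)%N -> open (Q p)) -> open (capn N Q).
Proof.
elim: N => [|N IH] HQ /=; first exact: openT.
apply: openI; [apply: IH => p pl; apply: HQ; exact: leqW | exact: HQ].
Qed.

Lemma capn_sub (T : Type) N (Q : nat -> set T) p : (p < N)%N -> capn N Q `<=` Q p.
Proof.
elim: N => [//|N IH] /=; rewrite ltnS leq_eqVlt => /orP [/eqP ->|pl] x [Hx Qx] //.
exact: IH.
Qed.

Lemma capn_in (T : Type) N (Q : nat -> set T) (A : set T) :
  (forall p, (p < N)%N -> A `<=` Q p) -> A `<=` capn N Q.
Proof.
elim: N => [//|N IH] HQ x Ax /=; split; last exact: HQ.
by apply: IH => // p pl; apply: HQ; exact: leqW.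
Qed.

Lemma pair_idx K i j : (i < K)%N -> (j < K)%N ->
  [/\ ((i * K + j) %/ K = i)%N, ((i * K + j) %% K = j)%N & (i * K + j < K * K)%N].
Proof.
move=> il jl; have K0 : (0 < K)%N by lia.
split.
- by rewrite divnMDl // divn_small // addn0.
- by rewrite modnMDl modn_small.
- nia.
Qed.

Lemma idx_pair K p : (p < K * K)%N -> [/\ (0 < K)%N, (p %/ K < K)%N & (p %% K < K)%N].
Proof.
move=> pl; have K0 : (0 < K)%N by case: K pl.
by split => //; [rewrite ltn_divLR | rewrite ltn_pmod].
Qed.



Section Main.
Variables (T : topologicalType) (h hinv : T -> T).
Hypotheses (hom : homeomorphism h hinv) (mini : minimal_homeo h)
  (hs : hausdorff_space T) (cT : compact [set: T]) (iT : infinite_set [set: T]).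

Lemma closed_img e (A : set T) : closed A -> closed (hpow h hinv e @` A).
Proof.
case: hom => hc hic _ _ cA; apply: compact_closed => //.
apply: continuous_compact; first by apply: continuous_subspaceT; exact: hpow_cont.
exact: (subclosed_compact cA cT).
Qed.

Lemma main_ind k : forall F, closed F -> smallk h hinv k F ->
  forall U, open U -> U !=set0 -> pr h hinv F U.
Proof.
have [hc hic hK hiK] := hom.
elim: k => [|k IH] F cF sF U oU Une.
  by rewrite (small0 sF); exact: pr_set0.
have [Y [U' [[oY nY] [oU' nU'] sY sU' dYU]]] := split_open hom mini hs cT iT oU Une.
have [s [us covs]] := @fin_cover T [set: T] (fun n => hpow h hinv n @^-1` Y) cT
  (fun n => open_comp (fun z _ => @hpow_cont T h hinv n hc hic z) oY)
  (fun x _ => let: ex_intro n Hn := orbit_cover hom mini oY nY x in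
     ex_intro2 _ _ n I Hn).
pose K := size s; pose d i := nth 0 s i.
pose ii p := (p %/ K)%N; pose jj p := (p %% K)%N.
pose e p := d (jj p) - d (ii p).
pose G p := if ii p != jj p then F `&` (hpow h hinv (e p) @` F) else set0.
have prG : pr h hinv [set x | exists2 p, (p < K * K)%N & G p x] U'.
  apply: (pr_bigunion hom mini hs cT iT) => // p pl W oW nW.
  rewrite /G; case: ifP => [ne|_]; last exact: pr_set0.
  have [K0 iil jjl] := idx_pair pl.
  apply: IH => //.
    by apply: closedI => //; exact: closed_img.
  apply: small_step => //; rewrite /e subr_eq0 /d nth_uniq //.
  by rewrite eq_sym.
have [n1 [V1 [d1 [op1 im1 cov1 dis1]]]] := prG.
pose O := \bigcup_(i in [set i | (i < n1)%N]) V1 i.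
have oO : open O by apply: bigcup_open.
pose F' := F `&` ~` O.
have cF' : closed F' by apply: closedI => //; apply: open_closedC.
have prO : pr h hinv O U'.
  by exists n1, V1, d1; split => // x [i il Vx]; exists i.
have F'free : forall p, (p < K * K)%N -> ii p != jj p ->
    F' `&` (hpow h hinv (e p) @` F') = set0.
  move=> p pl ne; rewrite -subset0 => z [[Fz nOz] [x [Fx _] xz]].
  apply: nOz; have : G p z by rewrite /G ne; split => //; exists x.
  by move=> Gz; have [i il Vz] := cov1 z (ex_intro2 _ _ p pl Gz); exists i.
have sepP : forall p, exists AB : set T * set T,
    (ii p != jj p) && (p < K * K)%N ->
    [/\ open AB.1, open AB.2, F' `<=` AB.1,
        hpow h hinv (e p) @` F' `<=` AB.2 & AB.1 `&` AB.2 = set0].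
  move=> p; have [/andP [ne pl]|nc] := pselect ((ii p != jj p) && (p < K * K)%N).
    have [A [B [oA oB FA FB AB]]] :=
      sep_closed hs cT cF' (@closed_img (e p) F' cF') (F'free p pl ne).
    by exists (A, B).
  by exists (set0, set0) => c; exfalso; apply: nc.
case: (choice sepP) => AB HAB.
pose Q p := if (ii p != jj p) && (p < K * K)%N
  then (AB p).1 `&` (hpow h hinv (e p) @^-1` (AB p).2) else setT.
pose W := capn (K * K) Q.
have oW : open W.
  apply: capn_open => p _; rewrite /Q; case: ifP => [c|_]; last exact: openT.
  have [oA oB _ _ _] := HAB p c.
  by apply: openI => //; apply: open_comp => // z _; exact: hpow_cont.
have F'W : F' `<=` W.
  apply: capn_in => p _ x F'x; rewrite /Q; case: ifP => [c|_] //.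
  have [_ _ FA FB _] := HAB p c; split; first exact: FA.
  by apply: FB; exists x.
pose V' i := W `&` (hpow h hinv (d i) @^-1` Y).
have prF' : pr h hinv F' Y.
  exists K, V', d; split.
  - move=> i _; apply: openI => //; apply: open_comp => // z _; exact: hpow_cont.
  - by move=> i _ z [x [_ Hx] <-].
  - move=> x F'x; have [i il Hx] := covs x I; exists i => //; split => //.
    exact: F'W.
  - move=> i j il jl ij z [x [Wx _] xz] [x' [Wx' _] x'z].
    have [ip jp pl] := pair_idx il jl.
    set p := (i * K + j)%N in ip jp pl.
    have c : (ii p != jj p) && (p < K * K)%N by rewrite /ii /jj ip jp ij pl.
    have [_ _ _ _ ABp] := HAB p c.
    have xe : x = hpow h hinv (e p) x'.
      rewrite /e /ii /jj ip jp addrC hpowD // x'z -xz hpowK //.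
    have := capn_sub pl Wx; rewrite /Q c => -[Ax _].
    have := capn_sub pl Wx'; rewrite /Q c => -[_ Bx'].
    have : ((AB p).1 `&` (AB p).2) x by split => //; rewrite xe.
    by rewrite ABp.
have := pr_union prF' prO dYU.
apply: pr_sub; last by move=> z [/sY|/sU'].
move=> x Fx; have [Ox|nOx] := pselect (O x); [right | left] => //.
Qed.
End Main.

Local Close Scope ring_scope.

Theorem proposition3p11 (R : realType) (X : metricType R) (h hinv : X -> X)
  (F : set X) :
  compact [set: X] -> infinite_set [set: X] ->
  homeomorphism h hinv -> minimal_homeo h ->
  closed F -> top_small h hinv F -> thin h hinv F.
Proof.
move=> cT iT hom mini cF [k sF] U oU Une.
apply: pr_prec.
exact: (main_ind hom mini (@metric_hausdorff R X) cT iT cF sF oU Une).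
Qed.
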